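(* Suppose the RB is stochastic monotone, i.e. satisfies: (D1) for each $a\in\{0,1\}$ and all $x<y$ in $\mathcal X$, $\sum_{w\ge z}P_{xw}(a)\le\sum_{w\ge z}P_{yw}(a)$ for every $z\in\mathcal X$; (D2) for every $z\in\mathcal X$, $S_{zx}(a):=\sum_{w\ge z}P_{xw}(a)$ is submodular in $(x,a)$; (D3) for each $a\in\{0,1\}$, $c(x,a)$ is non-decreasing in $x$; (D4) $c(x,a)$ is submodular in $(x,a)$. Then: 1. for every $\lambda\in\mathbb R$ there exists a threshold $\ell_\lambda\in\{0,\dots,|\mathcal X|\}$ such that the threshold policy $g^{(\ell_\lambda)}$ is optimal for minimizing $J^{(g)}_\lambda$ (if several such thresholds exist, $\ell_\lambda$ denotes the largest); 2. if, for every $x\in\mathcal X$, $N^{(g^{(\ell)})}(x)$ is non-increasing in $\ell$, then $\ell_\lambda$ is non-decreasing in $\lambda$; consequently the RB is indexable, its Whittle index $w(x)$ is non-decreasing in $x$, and for any $\ell\in\{0,\dots,|\mathcal X|-1\}$ the set $\{x: N^{(g^{(\ell)})}(x)\ne N^{(g^{(\ell+1)})}(x)\}$ is non-empty and for any $x$ in it, $w(\ell+1)=\dfrac{D^{(g^{(\ell+1)})}(x)-D^{(g^{(\ell)})}(x)}{N^{(g^{(\ell)})}(x)-N^{(g^{(\ell+1)})}(x)}$.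
   Context: A restless bandit (RB) has state space $\mathcal X=\{1,\dots,|\mathcal X|\}$ (totally ordered), actions $\{0,1\}$ (0 = passive, 1 = active, ordered $0<1$), transition matrices $P(0),P(1)$, cost $c:\mathcal X\times\{0,1\}\to\mathbb R$, discount factor $\beta\in(0,1)$. A function $f$ on a product of ordered sets is submodular if $f(x_1,y_2)-f(x_1,y_1)\ge f(x_2,y_2)-f(x_2,y_1)$ whenever $x_2\ge x_1$, $y_2\ge y_1$. For $\lambda\in\mathbb R$, $c_\lambda(x,a)=c(x,a)+\lambda a$. For a Markov policy $g$ (with $X_{t+1}$ drawn from $P_{X_t\,\cdot}(g(X_t))$): $J^{(g)}_\lambda(x)=(1-\beta)\mathbb E[\sum_{t\ge0}\beta^tc_\lambda(X_t,g(X_t))\mid X_0=x]$, $D^{(g)}(x)=(1-\beta)\mathbb E[\sum_{t\ge0}\beta^tc(X_t,g(X_t))\mid X_0=x]$, $N^{(g)}(x)=(1-\beta)\mathbb E[\sum_{t\ge0}\beta^tg(X_t)\mid X_0=x]$. For $\ell\in\{0,\dots,|\mathcal X|\}$, $g^{(\ell)}$ is passive at states $x\le\ell$ and active at states $x>\ell$. $V_\lambda$ is the fixed point of $V_\lambda(x)=\min\{H_\lambda(x,0),H_\lambda(x,1)\}$, $H_\lambda(x,a)=(1-\beta)c_\lambda(x,a)+\beta\sum_yP_{xy}(a)V_\lambda(y)$; $g_\lambda(x)=0$ iff $H_\lambda(x,0)<H_\lambda(x,1)$; $\Pi_\lambda=\{x:g_\lambda(x)=0\}$. Indexable: $\lambda'\le\lambda''\Rightarrow\Pi_{\lambda'}\subseteq\Pi_{\lambda''}$;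 Whittle index $w(x)=\inf\{\lambda:x\in\Pi_\lambda\}$. *)

(* Defs.v *)
From HB Require Import structures.
From mathcomp Require Import all_boot all_order all_algebra.
From mathcomp Require Import all_classical all_reals all_analysis.
Set Implicit Arguments. Unset Strict Implicit. Unset Printing Implicit Defensive.
Import Order.TTheory GRing.Theory Num.Theory numFieldNormedType.Exports.
Local Open Scope classical_set_scope.
Local Open Scope ring_scope.

(* States X = {1,...,n} are encoded 0-based as 'I_n (state x <-> index x-1);
   actions are bool (false = passive = 0, true = active = 1). *)
Section RB.
Variables (R : realType) (n : nat).
Implicit Types (P : bool -> 'M[R]_n) (c : 'I_n -> bool -> R) (g : 'I_n -> bool).

Definition stochastic P : Prop :=
  (forall a (x y : 'I_n), 0 <= P a x y) /\
  (forall a (x : 'I_n), \sum_(y < n) P a x y = 1).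

Definition submodular (f : 'I_n -> bool -> R) : Prop :=
  forall (x1 x2 : 'I_n) (a1 a2 : bool), (x1 <= x2)%N -> (a1 <= a2)%N ->
    f x1 a2 - f x1 a1 >= f x2 a2 - f x2 a1.

Definition tailP P (z x : 'I_n) (a : bool) : R :=
  \sum_(w < n | (z <= w)%N) P a x w.

Definition D1 P : Prop := forall a (x y z : 'I_n), (x < y)%N ->
  tailP P z x a <= tailP P z y a.
Definition D2 P : Prop := forall z : 'I_n, submodular (tailP P z).
Definition D3 c : Prop := forall a (x y : 'I_n), (x <= y)%N -> c x a <= c y a.
Definition D4 c : Prop := submodular c.

Definition Pg P g : 'M[R]_n := \matrix_(i, j) P (g i) i j.

(* discounted (normalized) expected total cost of per-step cost f under
   policy g started at x:
   (1-beta) * sum_t beta^t E[f(X_t, g(X_t)) | X_0 = x]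
   with E[f(X_t,g(X_t)) | X_0 = x] = ((Pg g)^t f_g)(x). *)
Definition disc P (beta : R) g (f : 'I_n -> bool -> R) (x : 'I_n) : R :=
  (1 - beta) * limn (series (fun t : nat =>
     beta ^+ t * (iter t (fun v : 'cV[R]_n => Pg P g *m v)
                         (\col_i f i (g i))) x ord0)).

Definition clam c (lam : R) (x : 'I_n) (a : bool) : R := c x a + lam * (a%:R).
Definition Jg P c beta lam g := disc P beta g (clam c lam).
Definition Dg P c beta g := disc P beta g c.
Definition Ng P beta g := disc P beta g (fun _ a => a%:R).

(* threshold policy g^(l): passive at states x <= l, i.e. at indices i < l *)
Definition thr (l : nat) : 'I_n -> bool := fun i => (l <= i)%N.

(* optimality among (stationary, deterministic) Markov policies *)
Definition optimal P c beta lam g : Prop :=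
  forall g' : 'I_n -> bool, forall x, Jg P c beta lam g x <= Jg P c beta lam g' x.

(* l_lambda: the largest optimal threshold (0 if none) *)
Definition ell P c beta lam : nat :=
  \max_(l < n.+1 | `[< optimal P c beta lam (thr l) >]) (l : nat).

Definition Hq P c beta lam (V : {ffun 'I_n -> R}) (x : 'I_n) (a : bool) : R :=
  (1 - beta) * clam c lam x a + beta * \sum_(y < n) P a x y * V y.
Definition bellman_fix P c beta lam (V : {ffun 'I_n -> R}) : Prop :=
  forall x, V x = Order.min (Hq P c beta lam V x false) (Hq P c beta lam V x true).
Definition Vlam P c beta lam : {ffun 'I_n -> R} :=
  xget [ffun _ => 0] [set V | bellman_fix P c beta lam V].

Definition Pi P c beta lam : set 'I_n :=
  [set x | Hq P c beta lam (Vlam P c beta lam) x false <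
           Hq P c beta lam (Vlam P c beta lam) x true].

Definition indexable P c beta : Prop :=
  forall lam1 lam2 : R, lam1 <= lam2 -> Pi P c beta lam1 `<=` Pi P c beta lam2.

Definition whittle P c beta (x : 'I_n) : R := inf [set lam | Pi P c beta lam x].

End RB.

(* Main.v *)
Require Import Defs.
From HB Require Import structures.
From mathcomp Require Import all_boot all_order all_algebra.
From mathcomp Require Import all_classical all_reals all_analysis.
From mathcomp Require Import ring lra.
Import Order.TTheory GRing.Theory Num.Theory numFieldNormedType.Exports.
Local Open Scope classical_set_scope.
Local Open Scope ring_scope.

Lemma cvg_geom_bound (R : realType) (beta : R) (s : R^nat) (l B : R) :
  0 <= beta < 1 ->
  (forall T, `|l - s T| <= B * beta ^+ T) -> s @ \oo --> l.
Proof.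
move=> /andP[hb0 hb1] H; apply/cvgrPdist_le => e e0.
have hn : `|beta| < 1 by rewrite ger0_norm.
have hB : 0 < `|B| + 1 by rewrite ltr_wpDl.
have /cvgrPdist_le /(_ (e / (`|B| + 1))) := cvg_expr hn.
move=> /(_ (divr_gt0 e0 hB)); apply: filterS => T.
rewrite sub0r normrN ger0_norm ?exprn_ge0 // => hT.
apply: le_trans (H T) _.
have hbT : 0 <= beta ^+ T by rewrite exprn_ge0.
apply: (@le_trans _ _ (`|B| * beta ^+ T)).
  by apply: ler_wpM2r => //; apply: ler_norm.
apply: (@le_trans _ _ ((`|B| + 1) * beta ^+ T)).
  by apply: ler_wpM2r => //; lra.
by rewrite -ler_pdivlMl // mulrC.
Qed.

Lemma arith_big (R : realType) (b lam c1 c0 E1 E0 B : R) :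
  0 < b -> b < 1 -> 0 <= B -> -B <= c1 -> c0 <= B -> -B <= E1 -> E0 <= B ->
  2 * B < (1 - b) * lam ->
  0 < ((1 - b) * (c1 + lam) + b * E1) - ((1 - b) * c0 + b * E0).
Proof.
move=> hb0 hb1 hB h1 h2 h3 h4 h5.
have f1 : (1 - b) * (- (2 * B)) <= (1 - b) * (c1 - c0) by apply: ler_wpM2l; lra.
have f2 : b * (- (2 * B)) <= b * (E1 - E0) by apply: ler_wpM2l; lra.
have f3 : b * B <= B by apply: ler_piMl; lra.
lra.
Qed.
Lemma arith_small (R : realType) (b lam c1 c0 E1 E0 B : R) :
  0 < b -> b < 1 -> 0 <= B -> c1 <= B -> -B <= c0 -> E1 <= B + lam -> -B + lam <= E0 ->
  (1 - b) * lam < - (2 * B) ->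
  ((1 - b) * (c1 + lam) + b * E1) - ((1 - b) * c0 + b * E0) < 0.
Proof.
move=> hb0 hb1 hB h1 h2 h3 h4 h5.
have f1 : (1 - b) * (c1 - c0) <= (1 - b) * (2 * B) by apply: ler_wpM2l; lra.
have f2 : b * (E1 - E0) <= b * (2 * B) by apply: ler_wpM2l; lra.
have f3 : b * B <= B by apply: ler_piMl; lra.
lra.
Qed.
Lemma arith_lip (R : realType) (b lam mu c1 c0 E1l E0l E1m E0m d : R) :
  0 < b -> b < 1 -> lam - mu <= d -> E1l <= E1m + d -> E0m <= E0l + d -> 0 <= d ->
  ((1 - b) * (c1 + lam) + b * E1l) - ((1 - b) * c0 + b * E0l) <=
  ((1 - b) * (c1 + mu) + b * E1m) - ((1 - b) * c0 + b * E0m) + 3 * d.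
Proof.
move=> hb0 hb1 h1 h2 h3 hd.
have f1 : (1 - b) * (lam - mu) <= (1 - b) * d by apply: ler_wpM2l; lra.
have f2 : b * (E1l - E1m) <= b * d by apply: ler_wpM2l; lra.
have f3 : b * (E0m - E0l) <= b * d by apply: ler_wpM2l; lra.
have f4 : b * d <= d by apply: ler_piMl; lra.
lra.
Qed.

Lemma arith1 (R : realType) (D1 D2 Dg N1 N2 Ng a b : R) :
  D1 + a * N1 <= D2 + a * N2 -> D2 + b * N2 <= Dg + b * Ng ->
  (b - a) * N1 <= (b - a) * N2 -> D1 + b * N1 <= Dg + b * Ng.
Proof. move=> h1 h2 h3; rewrite !mulrBl in h3; lra. Qed.

Lemma tail_lift (R : realType) n (r : 'I_n.+1 -> R) (z : 'I_n) :
  \sum_(w < n.+1 | (lift ord0 z <= w)%N) r w =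
  \sum_(w < n | (z <= w)%N) r (lift ord0 w).
Proof.
rewrite big_mkcond big_ord_recl /= add0r [RHS]big_mkcond.
by apply: eq_bigr => i _; rewrite /= /bump /= !add1n ltnS.
Qed.

Lemma abel (R : realType) n (r W : 'I_n -> R) :
  (forall x y : 'I_n, (x <= y)%N -> W x <= W y) ->
  (forall z : 'I_n, 0 <= \sum_(w < n | (z <= w)%N) r w) ->
  (forall y, 0 <= W y) -> 0 <= \sum_(w < n) r w * W w.
Proof.
elim: n r W => [|n IH] r W hW hr hW0; first by rewrite big_ord0.
rewrite big_ord_recl /=.
pose r' := fun i : 'I_n => r (lift ord0 i).
pose W' := fun i : 'I_n => W (lift ord0 i) - W ord0.
have e : \sum_(i < n) r (lift ord0 i) * W (lift ord0 i)
   = \sum_(i < n) r' i * W' i + W ord0 * \sum_(i < n) r' i.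
  rewrite mulr_sumr -big_split; apply: eq_bigr => i _ /=; rewrite /r' /W'; ring.
have h1 : 0 <= \sum_(i < n) r' i * W' i.
  apply: IH.
  - move=> x y hxy; rewrite /W' lerD2r; apply: hW.
    by rewrite /= /bump /= !add1n ltnS.
  - by move=> z; rewrite /r' -tail_lift; apply: hr.
  - by move=> y; rewrite /W' subr_ge0; apply: hW.
have h2 : 0 <= r ord0 + \sum_(i < n) r' i.
  have := hr ord0; rewrite big_mkcond big_ord_recl /=.
  by rewrite /r'.
rewrite e addrA -[X in X + _ + _]mulrC -addrA [X in _ + X]addrC addrA -mulrDr.
by apply: addr_ge0 => //; apply: mulr_ge0.
Qed.

Lemma abel0 (R : realType) n (r W : 'I_n -> R) :
  (forall x y : 'I_n, (x <= y)%N -> W x <= W y) ->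
  (forall z : 'I_n, 0 <= \sum_(w < n | (z <= w)%N) r w) ->
  \sum_(w < n) r w = 0 -> 0 <= \sum_(w < n) r w * W w.
Proof.
case: n r W => [|n] r W hW hr h0; first by rewrite big_ord0.
have h := @abel R n.+1 r (fun y => W y - W ord0).
have e : \sum_(w < n.+1) r w * (W w - W ord0) =
             \sum_(w < n.+1) r w * W w - W ord0 * \sum_(w < n.+1) r w.
  by rewrite mulr_sumr -sumrB; apply: eq_bigr => i _; ring.
have := h _ hr _; rewrite e h0 mulr0 subr0; apply.
- by move=> x y hxy; rewrite lerD2r; apply: hW.
- by move=> y; rewrite subr_ge0; apply: hW.
Qed.

Section Basic.
Variables (R : realType) (n : nat) (P : bool -> 'M[R]_n) (beta : R).
Hypotheses (hb0 : 0 < beta) (hb1 : beta < 1).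
Hypotheses (HP0 : forall a x y, 0 <= P a x y)
           (HP1 : forall a x, \sum_(y < n) P a x y = 1).

Definition EV a x (u : 'I_n -> R) := \sum_(y < n) P a x y * u y.

Lemma EV_B a x u v : EV a x (fun y => u y - v y) = EV a x u - EV a x v.
Proof. by rewrite /EV -sumrB; apply: eq_bigr => y _; rewrite mulrBr. Qed.

Lemma EV_D a x u v : EV a x (fun y => u y + v y) = EV a x u + EV a x v.
Proof. by rewrite /EV -big_split; apply: eq_bigr => y _; rewrite mulrDr. Qed.

Lemma EV_Z a x k u : EV a x (fun y => k * u y) = k * EV a x u.
Proof. by rewrite /EV mulr_sumr; apply: eq_bigr => y _; rewrite mulrCA. Qed.

Lemma EV_const a x k : EV a x (fun _ => k) = k.
Proof. by rewrite /EV -big_distrl /= HP1 mul1r. Qed.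

Lemma EV_ext a x u v : (forall y, u y = v y) -> EV a x u = EV a x v.
Proof. by move=> h; apply: eq_bigr => y _; rewrite h. Qed.

Lemma EV_le a x u v : (forall y, u y <= v y) -> EV a x u <= EV a x v.
Proof. by move=> h; apply: ler_sum => y _; apply: ler_wpM2l. Qed.

Lemma EV_ge a x u m : (forall y, m <= u y) -> m <= EV a x u.
Proof. by move=> h; rewrite -(EV_const a x m); apply: EV_le. Qed.

Lemma EV_leK a x u m : (forall y, u y <= m) -> EV a x u <= m.
Proof. by move=> h; rewrite -(EV_const a x m); apply: EV_le. Qed.

Lemma cmp (F G : 'I_n -> R) :
  (forall x, exists a, beta * EV a x (fun y => F y - G y) <= F x - G x) ->
  forall x, G x <= F x.
Proof.
move=> H x.
pose D := fun y => F y - G y.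
have [x0 _ hmin] := @arg_minP _ R _ x xpredT D isT.
set m := D x0 in hmin.
have hm : 0 <= m.
  have [a ha] := H x0.
  have : beta * m <= m.
    apply: le_trans ha; apply: ler_wpM2l; first exact: ltW.
    by apply: EV_ge => y; apply: hmin.
  rewrite -subr_ge0 -{1}(mul1r m) -mulrBl => h.
  by rewrite -(pmulr_rge0 _ (_ : 0 < 1 - beta)) // subr_gt0.
by rewrite -subr_ge0; apply: le_trans hm (hmin x isT).
Qed.

Definition polfix g (f : 'I_n -> bool -> R) (u : 'I_n -> R) :=
  forall x, u x = (1 - beta) * f x (g x) + beta * EV (g x) x u.

Lemma polfix_uniq g f u v : polfix g f u -> polfix g f v -> forall x, u x = v x.
Proof.
move=> hu hv x; apply/eqP; rewrite eq_le; apply/andP; split.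
- apply: cmp => y; exists (g y); rewrite EV_B (hu y) (hv y); lra.
- apply: cmp => y; exists (g y); rewrite EV_B (hu y) (hv y); lra.
Qed.


Lemma polfix_zero g (u : 'I_n -> R) :
  (forall x, u x = beta * EV (g x) x u) -> forall x, u x = 0.
Proof.
move=> h x; apply/eqP; rewrite eq_le; apply/andP; split.
- apply: (@cmp (fun _ => 0) u) => y; exists (g y).
  rewrite (EV_B _ _ (fun _ => 0) u) EV_const (h y); lra.
- apply: (@cmp u (fun _ => 0)) => y; exists (g y).
  rewrite (EV_B _ _ u (fun _ => 0)) EV_const (h y); lra.
Qed.

Lemma Amx_unit g : (1%:M - beta *: Pg P g) \in unitmx.
Proof.
set A := (1%:M - beta *: Pg P g).
rewrite -unitmx_tr -row_free_unit -kermx_eq0; apply/eqP/row_matrixP => i.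
rewrite row0; set v := row i (kermx A^T).
have hv : v *m A^T = 0 by rewrite /v -row_mul mulmx_ker row0.
set u := v^T.
have hu : A *m u = 0 by rewrite /u -[A]trmxK -trmx_mul hv trmx0.
have key : forall x, u x 0 = beta * EV (g x) x (fun y => u y 0).
  move=> x; move: hu; rewrite /A mulmxBl mul1mx -scalemxAl => /eqP.
  rewrite subr_eq0 => /eqP /matrixP /(_ x 0).
  by rewrite !mxE /EV => ->; congr (_ * _); apply: eq_bigr => y _; rewrite mxE.
have u0 := @polfix_zero g (fun y => u y 0) key.
by apply/rowP => j; move: (u0 j); rewrite /u [in X in X -> _]mxE => ->; rewrite mxE.
Qed.


Definition Mop g := fun v : 'cV[R]_n => Pg P g *m v.

Lemma iter_lin g T (u v : 'cV[R]_n) k :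
  iter T (Mop g) (u + k *: v) = iter T (Mop g) u + k *: iter T (Mop g) v.
Proof.
elim: T => [//|T IH]; by rewrite !iterS IH /Mop mulmxDr scalemxAr.
Qed.

Lemma Mop_entry g (v : 'cV[R]_n) x : Mop g v x 0 = EV (g x) x (fun y => v y 0).
Proof. by rewrite /Mop mxE; apply: eq_bigr => y _; rewrite mxE. Qed.

Lemma iter_bound g T (v : 'cV[R]_n) B :
  (forall y, `|v y 0| <= B) -> forall x, `|iter T (Mop g) v x 0| <= B.
Proof.
move=> hv; elim: T => [//|T IH] x.
rewrite iterS Mop_entry; apply: le_trans (ler_norm_sum _ _ _) _.
rewrite -(EV_const (g x) x B); apply: ler_sum => y _.
by rewrite normrM ger0_norm //; apply: ler_wpM2l.
Qed.

Lemma disc_eq g f x :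
  disc P beta g f x = (1 - beta) *
    (invmx (1%:M - beta *: Pg P g) *m \col_i f i (g i)) x 0.
Proof.
set A := 1%:M - beta *: Pg P g; set fc := \col_i f i (g i).
set w := invmx A *m fc.
have hAw : A *m w = fc by rewrite /w mulKVmx //; apply: Amx_unit.
have hw : w = fc + beta *: Mop g w.
  by rewrite -hAw /A mulmxBl mul1mx -scalemxAl /Mop subrK.
have hT : forall T, w = \sum_(t < T) beta ^+ t *: iter t (Mop g) fc
                        + beta ^+ T *: iter T (Mop g) w.
  elim=> [|T IH]; first by rewrite big_ord0 expr0 scale1r add0r.
  rewrite big_ord_recr /= {1}IH.
  rewrite {1}hw iter_lin -iterSr scalerDr scalerA -exprSr addrA //.
congr (_ * _); apply: cvg_lim; first exact: Rhausdorff.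
apply: (@cvg_geom_bound _ beta _ _ (\sum_(y < n) `|w y 0|)).
  by rewrite (ltW hb0) hb1.
move=> T; rewrite /series /=.
have -> : \sum_(0 <= k < T) beta ^+ k * iter k (Mop g) fc x 0
   = (\sum_(t < T) beta ^+ t *: iter t (Mop g) fc) x 0.
  by rewrite big_mkord summxE; apply: eq_bigr => t _; rewrite mxE.
rewrite {1}(hT T) mxE [X in `|_ + X - _|]mxE addrAC subrr add0r.
rewrite normrM ger0_norm ?exprn_ge0 ?(ltW hb0) // mulrC.
apply: ler_wpM2r; first by rewrite exprn_ge0 // ltW.
apply: iter_bound => y.
by rewrite (bigD1 y) //= lerDl sumr_ge0.
Qed.

Lemma disc_fix g f : polfix g f (disc P beta g f).
Proof.
move=> x; rewrite {1}disc_eq (@EV_ext _ _ _ (fun y => (1 - beta) *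
    (invmx (1%:M - beta *: Pg P g) *m \col_i f i (g i)) y 0)); last first.
  by move=> y; rewrite disc_eq.
set w := invmx _ *m _.
have hAw : (1%:M - beta *: Pg P g) *m w = \col_i f i (g i).
  by rewrite /w mulKVmx //; apply: Amx_unit.
have : w = \col_i f i (g i) + beta *: Mop g w.
  by rewrite -hAw mulmxBl mul1mx -scalemxAl /Mop subrK.
clearbody w => /matrixP /(_ x 0) h.
have -> : w x 0 = f x (g x) + beta * EV (g x) x (fun y => w y 0).
  by rewrite {1}h mxE [X in _ + X]mxE mxE Mop_entry.
rewrite EV_Z; ring.
Qed.


Definition Hf (c : 'I_n -> bool -> R) lam (V : 'I_n -> R) x a :=
  (1 - beta) * clam c lam x a + beta * EV a x V.

Lemma Hf_le c lam U W x a : (forall y, U y <= W y) -> Hf c lam U x a <= Hf c lam W x a.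
Proof.
move=> h; rewrite /Hf lerD2l; apply: ler_wpM2l; first exact: ltW.
exact: EV_le.
Qed.

Lemma bell_cmp c lam (W U : 'I_n -> R) :
  (forall x, exists a, Hf c lam W x a <= W x) ->
  (forall x a, U x <= Hf c lam U x a) -> forall x, U x <= W x.
Proof.
move=> hW hU; apply: cmp => x; have [a ha] := hW x; exists a.
have := hU x a; move: ha; rewrite /Hf EV_B; lra.
Qed.

Definition Jf g c lam := disc P beta g (clam c lam).

Lemma J_fix g c lam x : Jf g c lam x = Hf c lam (Jf g c lam) x (g x).
Proof. exact: disc_fix. Qed.

Lemma bf_le c lam (V : {ffun 'I_n -> R}) : bellman_fix P c beta lam V ->
  forall x a, V x <= Hf c lam V x a.
Proof.
move=> h x a; rewrite (h x); case: a; rewrite ge_min lexx ?orbT //.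
Qed.

Lemma bf_ex c lam (V : {ffun 'I_n -> R}) : bellman_fix P c beta lam V ->
  forall x, exists a, Hf c lam V x a <= V x.
Proof.
move=> h x; rewrite (h x).
case: (leP (Hq P c beta lam V x false) (Hq P c beta lam V x true)) => hh.
- by exists false.
- by exists true.
Qed.

Lemma bell_uniq c lam (V W : {ffun 'I_n -> R}) :
  bellman_fix P c beta lam V -> bellman_fix P c beta lam W -> forall x, V x = W x.
Proof.
move=> hV hW x; apply/eqP; rewrite eq_le; apply/andP; split.
- by apply: (@bell_cmp c lam); [apply: bf_ex | apply: bf_le].
- by apply: (@bell_cmp c lam); [apply: bf_ex | apply: bf_le].
Qed.

Lemma pol_sup c lam g (W : 'I_n -> R) :
  (forall x, Hf c lam W x (g x) <= W x) -> forall x, Jf g c lam x <= W x.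
Proof.
move=> hW; apply: cmp => x; exists (g x).
have := J_fix g c lam x; have := hW x; rewrite /Hf EV_B; lra.
Qed.

Lemma pol_sub c lam g (W : 'I_n -> R) :
  (forall x, W x <= Hf c lam W x (g x)) -> forall x, W x <= Jf g c lam x.
Proof.
move=> hW; apply: cmp => x; exists (g x).
have := J_fix g c lam x; have := hW x; rewrite /Hf EV_B; lra.
Qed.

Lemma bell_exists c lam : exists V : {ffun 'I_n -> R}, bellman_fix P c beta lam V.
Proof.
pose S (h : {ffun 'I_n -> bool}) := \sum_(x < n) Jf h c lam x.
have [g0 _ hmin] := @arg_minP _ R _ [ffun _ => false] xpredT S isT.
set J0 := Jf g0 c lam.
have claim : forall x a, J0 x <= Hf c lam J0 x a.
  move=> x a; rewrite leNgt; apply/negP => hlt.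
  pose g1 := [ffun y => if y == x then a else g0 y].
  set J1 := Jf g1 c lam.
  have h1 : forall y, J1 y <= J0 y.
    apply: pol_sup => y; case: (eqVneq y x) => [->|ne].
    + by rewrite /g1 ffunE eqxx; apply: ltW.
    + by rewrite /g1 ffunE (negPf ne) {2}/J0 J_fix.
  have h2 : J1 x < J0 x.
    rewrite /J1 J_fix /g1 ffunE eqxx.
    apply: le_lt_trans hlt; apply: Hf_le => y; rewrite -/J1.
    exact: h1.
  have := hmin g1 isT; rewrite /S (bigD1 x) //= [X in _ <= X](bigD1 x) //=.
  rewrite leNgt => /negP; apply; apply: ltr_leD => //.
  by apply: ler_sum => y _; apply: h1.
exists [ffun x => J0 x] => x; rewrite ffunE.
have hE : forall a, Hq P c beta lam [ffun x => J0 x] x a = Hf c lam J0 x a.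
  by move=> a; rewrite /Hq /Hf; congr (_ + _ * _); apply: eq_bigr => y _; rewrite ffunE.
rewrite !hE; apply/eqP; rewrite eq_le le_min !claim /=.
rewrite ge_min /J0 (J_fix g0 c lam x) -/J0.
by case: (g0 x); rewrite lexx ?orbT.
Qed.

Lemma Hf_ext c lam U W x a : (forall y, U y = W y) -> Hf c lam U x a = Hf c lam W x a.
Proof. by move=> h; rewrite /Hf (@EV_ext a x U W h). Qed.

Definition Vf c lam : 'I_n -> R := fun x => Vlam P c beta lam x.

Lemma Vlam_fix c lam : bellman_fix P c beta lam (Vlam P c beta lam).
Proof.
have [V hV] := bell_exists c lam.
by apply: (@xgetPex _ _ [set V | bellman_fix P c beta lam V]); exists V.
Qed.

Lemma V_le c lam x a : Vf c lam x <= Hf c lam (Vf c lam) x a.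
Proof. exact: (@bf_le c lam _ (Vlam_fix c lam) x a). Qed.

Lemma V_ex c lam x : exists a, Hf c lam (Vf c lam) x a <= Vf c lam x.
Proof. exact: (@bf_ex c lam _ (Vlam_fix c lam) x). Qed.

Definition greedy c lam (g : 'I_n -> bool) := forall x,
  Hf c lam (Vf c lam) x (g x) <= Hf c lam (Vf c lam) x (~~ g x).

Lemma greedy_J c lam g : greedy c lam g -> forall x, Jf g c lam x = Vf c lam x.
Proof.
move=> hg x; apply/eqP; rewrite eq_le; apply/andP; split.
- apply: pol_sup => y; have [a ha] := V_ex c lam y.
  move: (hg y); case: (g y) => /= h; case: a ha => ha //; exact: le_trans h ha.
- by apply: pol_sub => y; apply: V_le.
Qed.

Lemma V_le_J c lam g x : Vf c lam x <= Jf g c lam x.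
Proof. by apply: pol_sub => y; apply: V_le. Qed.

Lemma greedy_opt c lam g : greedy c lam g -> optimal P c beta lam g.
Proof.
move=> hg g' x; rewrite /Jg -/(Jf g c lam) -/(Jf g' c lam) greedy_J //.
exact: V_le_J.
Qed.

Lemma opt_J c lam g : optimal P c beta lam g -> forall x, Jf g c lam x = Vf c lam x.
Proof.
move=> ho x.
pose gs := fun y => Hf c lam (Vf c lam) y true < Hf c lam (Vf c lam) y false.
have hgs : greedy c lam gs.
  move=> y; rewrite /gs; case: ltP => h //=; exact: ltW.
apply/eqP; rewrite eq_le V_le_J andbT.
by rewrite -(@greedy_J c lam gs hgs x); apply: ho.
Qed.

Lemma opt_greedy c lam g : optimal P c beta lam g -> greedy c lam g.
Proof.
move=> ho x.
rewrite -(@Hf_ext c lam _ _ x (g x) (@opt_J c lam g ho)) -J_fix (@opt_J c lam g ho); exact: V_le.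
Qed.


Definition nondecr (u : 'I_n -> R) := forall x y : 'I_n, (x <= y)%N -> u x <= u y.

Lemma EV_mono (hD1 : D1 P) a (x y : 'I_n) u : (x <= y)%N -> nondecr u ->
  EV a x u <= EV a y u.
Proof.
move=> hxy hu; rewrite -subr_ge0 /EV -sumrB.
under eq_bigr do rewrite -mulrBl.
apply: abel0 => //.
- move=> z; rewrite sumrB subr_ge0.
  move: hxy; rewrite leq_eqVlt => /orP[/eqP/val_inj->//|hlt].
  exact: hD1.
- by rewrite sumrB !HP1 subrr.
Qed.

Lemma EV_submod (hD2 : D2 P) (x y : 'I_n) u : (x <= y)%N -> nondecr u ->
  EV true y u - EV false y u <= EV true x u - EV false x u.
Proof.
move=> hxy hu; rewrite -subr_ge0 /EV -!sumrB.
rewrite (_ : \sum_(i < n) _ = \sum_(w < n)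
   ((P true x w - P false x w) - (P true y w - P false y w)) * u w); last first.
  by apply: eq_bigr => w _; ring.
apply: abel0 => //.
- move=> z; rewrite !sumrB subr_ge0.
  exact: (hD2 z x y false true hxy isT).
- by rewrite !sumrB !HP1 !subrr.
Qed.

Lemma Hf_mono c lam (hD1 : D1 P) (hD3 : D3 c) (W : 'I_n -> R) (x y : 'I_n) a :
  (x <= y)%N -> nondecr W ->
  Hf c lam W x a <= Hf c lam W y a.
Proof.
move=> hxy hW; rewrite /Hf; apply: lerD.
- apply: ler_wpM2l; first by rewrite subr_ge0 ltW.
  by rewrite /clam lerD2r; apply: hD3.
- by apply: ler_wpM2l; [apply: ltW | apply: EV_mono].
Qed.

Lemma V_mono c lam (hD1 : D1 P) (hD3 : D3 c) : nondecr (Vf c lam).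
Proof.
pose idx (x : 'I_n) := [arg min_(y < x | (x <= y)%N) Vf c lam y]%O.
have hidx : forall x : 'I_n, (x <= idx x)%N /\ forall y : 'I_n, (x <= y)%N -> Vf c lam (idx x) <= Vf c lam y.
  by move=> x; rewrite /idx; case: arg_minP => //= i hi hmin.
pose Vh x := Vf c lam (idx x).
have hVh : nondecr Vh.
  move=> x1 x2 h12; rewrite /Vh; apply: (proj2 (hidx x1)).
  exact: leq_trans h12 (proj1 (hidx x2)).
have hle : forall x, Vh x <= Vf c lam x by move=> x; apply: (proj2 (hidx x)).
have hsup : forall x, Vf c lam x <= Vh x.
  apply: (@bell_cmp c lam) => [x|x a]; last exact: V_le.
  have [a ha] := V_ex c lam (idx x); exists a.
  apply: le_trans ha; apply: le_trans (@Hf_le c lam Vh (Vf c lam) (idx x) a hle).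
  exact: Hf_mono (proj1 (hidx x)) hVh.
move=> x y hxy; apply: le_trans (hsup x) _; apply: le_trans (hVh _ _ hxy) _.
exact: hle.
Qed.

Definition G c lam x :=
  Hf c lam (Vf c lam) x true - Hf c lam (Vf c lam) x false.

Lemma G_anti c lam (hD1 : D1 P) (hD2 : D2 P) (hD3 : D3 c) (hD4 : D4 c)
  (x y : 'I_n) : (x <= y)%N -> G c lam y <= G c lam x.
Proof.
move=> hxy; rewrite /G /Hf.
have h1 := hD4 x y false true hxy isT.
have h2 := EV_submod hD2 x y (Vf c lam) hxy (V_mono c lam hD1 hD3).
have hb : 0 <= 1 - beta by rewrite subr_ge0 ltW.
have e : forall z, (1 - beta) * clam c lam z true + beta * EV true z (Vf c lam) -
    ((1 - beta) * clam c lam z false + beta * EV false z (Vf c lam)) =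
    (1 - beta) * (c z true - c z false + lam) +
    beta * (EV true z (Vf c lam) - EV false z (Vf c lam)).
  by move=> z; rewrite /clam /=; ring.
rewrite !e; apply: lerD.
- by apply: ler_wpM2l => //; rewrite lerD2r.
- by apply: ler_wpM2l => //; apply: ltW.
Qed.


Lemma thr_gen (F : 'I_n -> R) (p : pred R) :
  (forall x y : 'I_n, (x <= y)%N -> p (F y) -> p (F x)) ->
  forall y : 'I_n, (y < \max_(i : 'I_n | p (F i)) i.+1)%N = p (F y).
Proof.
move=> hp y; apply/idP/idP => [hlt|hy]; last exact: (leq_bigmax_cond (F:=fun i : 'I_n => i.+1)).
case hpy: (p (F y)) => //; move: hlt; rewrite ltnNge => /negP hlt; exfalso; apply: hlt.
apply/bigmax_leqP => i hi; rewrite ltnNge; apply/negP => hyi.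
by rewrite (hp _ _ hyi hi) in hpy.
Qed.

Lemma thr_le_n (p : pred 'I_n) : (\max_(i : 'I_n | p i) i.+1 <= n)%N.
Proof. by apply/bigmax_leqP => i _; apply: ltn_ord. Qed.

Lemma optimal_of_thr c lam (L : nat) :
  (forall y : 'I_n, (y < L)%N -> 0 <= G c lam y) ->
  (forall y : 'I_n, (L <= y)%N -> G c lam y <= 0) ->
  optimal P c beta lam (thr L).
Proof.
move=> h1 h2; apply: greedy_opt => y; rewrite /thr.
case: (leqP L y) => hy /=.
- by have := h2 y hy; rewrite /G subr_le0.
- by have := h1 y hy; rewrite /G subr_ge0.
Qed.

Lemma thr_of_optimal c lam (L : nat) : optimal P c beta lam (thr L) ->
  (forall y : 'I_n, (y < L)%N -> 0 <= G c lam y) /\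
  (forall y : 'I_n, (L <= y)%N -> G c lam y <= 0).
Proof.
move=> /opt_greedy hg; split => y hy; have := hg y; rewrite /thr.
- by rewrite leqNgt hy /= /G subr_ge0.
- by rewrite hy /= /G subr_le0.
Qed.

Section Struct.
Variables (hD1 : D1 P) (hD2 : D2 P).

Lemma exists_thr c lam : D3 c -> D4 c ->
  exists L, (L <= n)%N /\ optimal P c beta lam (thr L).
Proof.
move=> hD3 hD4.
have hp : forall x y : 'I_n, (x <= y)%N -> (0 <= G c lam y) -> (0 <= G c lam x).
  by move=> x y hxy h; apply: le_trans h (@G_anti c lam hD1 hD2 hD3 hD4 _ _ hxy).
exists (\max_(i : 'I_n | 0 <= G c lam i) i.+1); split; first exact: thr_le_n.
apply: optimal_of_thr => y.
- by rewrite (@thr_gen (G c lam) (fun r => 0 <= r)).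
- by rewrite leqNgt (@thr_gen (G c lam) (fun r => 0 <= r)) // -ltNge => /ltW.
Qed.

Lemma exists_thr_strict c lam (x : 'I_n) : D3 c -> D4 c -> G c lam x <= 0 ->
  exists L, (L <= x)%N /\ optimal P c beta lam (thr L).
Proof.
move=> hD3 hD4 hx.
have hp : forall x y : 'I_n, (x <= y)%N -> (0 < G c lam y) -> (0 < G c lam x).
  by move=> x' y hxy h; apply: lt_le_trans h (@G_anti c lam hD1 hD2 hD3 hD4 _ _ hxy).
exists (\max_(i : 'I_n | 0 < G c lam i) i.+1); split.
  apply/bigmax_leqP => i hi; rewrite ltnNge; apply/negP => hxi.
  by have := lt_le_trans hi (le_trans (@G_anti c lam hD1 hD2 hD3 hD4 _ _ hxi) hx); rewrite ltxx.
apply: optimal_of_thr => y.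
- by rewrite (@thr_gen (G c lam) (fun r => 0 < r)) //; apply: ltW.
- by rewrite leqNgt (@thr_gen (G c lam) (fun r => 0 < r)) // -leNgt.
Qed.


Lemma J_lin g c lam x :
  Jf g c lam x = Dg P c beta g x + lam * Ng P beta g x.
Proof.
apply: (@polfix_uniq g (clam c lam) (Jf g c lam)
   (fun y => Dg P c beta g y + lam * Ng P beta g y)); first exact: disc_fix.
move=> y; rewrite /Dg /Ng.
rewrite (disc_fix g c y) (disc_fix g (fun _ a => (a%:R : R)) y).
rewrite EV_D EV_Z /clam; ring.
Qed.

Lemma Jg_Jf g c lam x : Jg P c beta lam g x = Jf g c lam x.
Proof. by []. Qed.

Lemma ell_spec c lam : D3 c -> D4 c ->
  optimal P c beta lam (thr (ell P c beta lam)) /\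
  forall l, (l <= n)%N -> optimal P c beta lam (thr l) -> (l <= ell P c beta lam)%N.
Proof.
move=> hD3 hD4; have [L [hL hoL]] := exists_thr c lam hD3 hD4.
pose A := [pred l : 'I_n.+1 | `[< optimal P c beta lam (thr l) >]].
have hA : (0 < #|A|)%N.
  apply/card_gt0P; have hL1 : (L < n.+1)%N by [].
  exists (Ordinal hL1).
  by rewrite inE.
have [i0 hi0 he] := @eq_bigmax_cond _ A (fun l => nat_of_ord l) hA.
have hell : ell P c beta lam = i0.
  by rewrite /ell -he; apply: eq_bigl => i; rewrite inE.
split; first by rewrite hell; move: hi0; rewrite inE.
move=> l hl ho; have hl' : (l < n.+1)%N by [].
rewrite /ell; apply: (@leq_bigmax_cond _ _ (fun l : 'I_n.+1 => nat_of_ord l) (Ordinal hl')).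
by apply/asboolP.
Qed.

Hypothesis HN : forall (x : 'I_n) (l1 l2 : nat), (l1 <= l2 <= n)%N ->
       Ng P beta (thr l2) x <= Ng P beta (thr l1) x.

Lemma ell_mono c lam1 lam2 : D3 c -> D4 c -> lam1 <= lam2 ->
  (ell P c beta lam1 <= ell P c beta lam2)%N.
Proof.
move=> hD3 hD4 hl.
have [ho1 _] := ell_spec c lam1 hD3 hD4.
have [ho2 hmax2] := ell_spec c lam2 hD3 hD4.
set L1 := ell P c beta lam1 in ho1 *; set L2 := ell P c beta lam2 in ho2 hmax2 *.
have hL1n : (L1 <= n)%N by apply/bigmax_leqP => i _; rewrite -ltnS.
rewrite leqNgt; apply/negP => hlt.
suff hopt : optimal P c beta lam2 (thr L1).
  by have := hmax2 L1 hL1n hopt; rewrite leqNgt hlt.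
move=> g' x.
have h1 := ho1 (thr L2) x; have h3 := ho2 g' x.
have h2 : Ng P beta (thr L1) x <= Ng P beta (thr L2) x.
  by apply: HN; rewrite (ltnW hlt).
have h4 : (lam2 - lam1) * Ng P beta (thr L1) x <= (lam2 - lam1) * Ng P beta (thr L2) x.
  by apply: ler_wpM2l => //; rewrite subr_ge0.
move: h1 h3; rewrite !Jg_Jf !J_lin => h1 h3.
exact: arith1 h1 h3 h4.
Qed.

Lemma Pi_G c lam x : Pi P c beta lam x <-> 0 < G c lam x.
Proof. by rewrite /Pi /G /= subr_gt0. Qed.

Lemma indexable_thm c : D3 c -> D4 c -> indexable P c beta.
Proof.
move=> hD3 hD4 l1 l2 hl x; rewrite !Pi_G => hx.
case: (ltP 0 (G c l2 x)) => // hG; exfalso.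
have [l [hlx hol]] := exists_thr_strict c l2 x hD3 hD4 hG.
have [L [hLn hoL]] := exists_thr c l1 hD3 hD4.
have hxL : (x < L)%N.
  rewrite ltnNge; apply/negP => hLx.
  have := (@thr_of_optimal c l1 L hoL).2 x hLx; rewrite leNgt hx.
  by [].
have hlL : (l <= L)%N by apply: leq_trans hlx (ltnW hxL).
have hol1 : optimal P c beta l1 (thr l).
  move=> g' y; have h1 := hol (thr L) y; have h3 := hoL g' y.
  have h2 : Ng P beta (thr L) y <= Ng P beta (thr l) y by apply: HN; rewrite hlL.
  have h4 : (l1 - l2) * Ng P beta (thr l) y <= (l1 - l2) * Ng P beta (thr L) y.
    by apply: ler_wnM2l => //; rewrite subr_le0.
  move: h1 h3; rewrite !Jg_Jf !J_lin => h1 h3.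
  exact: arith1 h1 h3 h4.
have := (@thr_of_optimal c l1 l hol1).2 x hlx; rewrite leNgt hx.
by [].
Qed.


Definition Bc (c : 'I_n -> bool -> R) : R := \sum_(x < n) \sum_(a : bool) `|c x a|.

Lemma c_bound c x a : `|c x a| <= Bc c.
Proof.
rewrite /Bc (bigD1 x) //= (bigD1 a) //= -addrA lerDl.
by apply: addr_ge0; apply: sumr_ge0 => i _ //; apply: sumr_ge0.
Qed.

Lemma Bc_ge0 c : 0 <= Bc c.
Proof. by apply: sumr_ge0 => i _; apply: sumr_ge0. Qed.

Lemma c_le c x a : c x a <= Bc c.
Proof. exact: le_trans (ler_norm _) (c_bound c x a). Qed.

Lemma c_ge c x a : - Bc c <= c x a.
Proof. by have := c_bound c x a; rewrite ler_norml => /andP[]. Qed.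

Lemma V_ub c lam k : (forall x, exists a, clam c lam x a <= k) ->
  forall x, Vf c lam x <= k.
Proof.
move=> H; apply: (@bell_cmp c lam (fun _ => k) (Vf c lam)) => [x|x a]; last exact: V_le.
have [a ha] := H x; exists a; rewrite /Hf EV_const.
have hb : 0 <= 1 - beta by rewrite subr_ge0 ltW.
have := ler_wpM2l hb ha; lra.
Qed.

Lemma V_lb c lam k : (forall x a, k <= clam c lam x a) ->
  forall x, k <= Vf c lam x.
Proof.
move=> H; apply: (@bell_cmp c lam (Vf c lam) (fun _ => k)) => [x|x a]; first exact: V_ex.
rewrite /Hf EV_const.
have hb : 0 <= 1 - beta by rewrite subr_ge0 ltW.
have := ler_wpM2l hb (H x a); lra.
Qed.

Lemma G_expand c lam x : G c lam x =
  ((1 - beta) * (c x true + lam) + beta * EV true x (Vf c lam)) -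
  ((1 - beta) * c x false + beta * EV false x (Vf c lam)).
Proof. by rewrite /G /Hf /clam /= mulr1 mulr0 addr0. Qed.

Definition Kc (c : 'I_n -> bool -> R) : R := 2 * Bc c / (1 - beta).

Lemma Kc_ge0 c : 0 <= Kc c.
Proof.
rewrite /Kc; apply: divr_ge0; last by rewrite subr_ge0 ltW.
by apply: mulr_ge0 => //; apply: Bc_ge0.
Qed.

Lemma G_big c lam x : Kc c < lam -> 0 < G c lam x.
Proof.
move=> hl; have hK := Kc_ge0 c; have hlam : 0 <= lam by apply: le_trans (ltW hl).
have hb : 0 < 1 - beta by rewrite subr_gt0.
have hVu : forall y, Vf c lam y <= Bc c.
  apply: V_ub => y; exists false; rewrite /clam /= mulr0 addr0; exact: c_le.
have hVl : forall y, - Bc c <= Vf c lam y.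
  apply: V_lb => y a; rewrite /clam; case: a => /=.
  - by rewrite mulr1 -[- Bc c]addr0; apply: lerD => //; apply: c_ge.
  - by rewrite mulr0 addr0; apply: c_ge.
rewrite G_expand; apply: (@arith_big _ _ _ _ _ _ _ _ hb0 hb1 (Bc_ge0 c) (c_ge c x true) (c_le c x false)
  (@EV_ge true x _ _ hVl) (@EV_leK false x _ _ hVu)).
have e : 2 * Bc c = (1 - beta) * Kc c by rewrite [RHS]mulrC /Kc divfK // lt0r_neq0.
by rewrite e ltr_pM2l.
Qed.

Lemma G_small c lam x : lam < - Kc c -> G c lam x < 0.
Proof.
move=> hl; have hK := Kc_ge0 c; have hlam : lam <= 0.
  by apply: ltW; apply: lt_le_trans hl _; rewrite oppr_le0.
have hb : 0 < 1 - beta by rewrite subr_gt0.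
have hVu : forall y, Vf c lam y <= Bc c + lam.
  apply: V_ub => y; exists true; rewrite /clam /= mulr1 lerD2r; exact: c_le.
have hVl : forall y, - Bc c + lam <= Vf c lam y.
  apply: V_lb => y a; rewrite /clam; case: a => /=.
  - by rewrite mulr1 lerD2r; apply: c_ge.
  - by rewrite mulr0 addr0; apply: le_trans (c_ge c y false); rewrite gerDl.
rewrite G_expand; apply: (@arith_small _ _ _ _ _ _ _ _ hb0 hb1 (Bc_ge0 c) (c_le c x true) (c_ge c x false)
  (@EV_leK true x _ _ hVu) (@EV_ge false x _ _ hVl)).
have e : 2 * Bc c = (1 - beta) * Kc c by rewrite [RHS]mulrC /Kc divfK // lt0r_neq0.
by rewrite e -mulrN ltr_pM2l.
Qed.

Definition Sx (c : 'I_n -> bool -> R) (x : 'I_n) := [set lam | Pi P c beta lam x].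

Lemma Sx_lb c x : has_lbound (Sx c x).
Proof.
exists (- Kc c) => lam; rewrite /Sx /= Pi_G => hG.
rewrite leNgt; apply/negP => hl.
by have := @G_small c lam x hl; rewrite ltNge (ltW hG).
Qed.

Lemma Sx_ne c x : Sx c x !=set0.
Proof.
exists (Kc c + 1); rewrite /Sx /= Pi_G; apply: (@G_big c).
by rewrite ltrDl.
Qed.

Lemma whittle_mono c (x y : 'I_n) : D3 c -> D4 c -> (x <= y)%N ->
  whittle P c beta x <= whittle P c beta y.
Proof.
move=> hD3 hD4 hxy; rewrite /whittle.
apply: lb_le_inf; first exact: (Sx_ne c y).
move=> lam hlam; apply: ge_inf; first exact: (Sx_lb c x).
move: hlam; rewrite /= !Pi_G => h; apply: lt_le_trans h _.
exact: (@G_anti c lam hD1 hD2 hD3 hD4 _ _ hxy).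
Qed.


Lemma V_lip c lam mu x : Vf c lam x <= Vf c mu x + `|lam - mu|.
Proof.
set d := `|lam - mu|.
apply: (@bell_cmp c lam (fun y => Vf c mu y + d) (Vf c lam)) => [y|y a]; last exact: V_le.
have [a ha] := V_ex c mu y; exists a.
rewrite /Hf EV_D EV_const.
have hb : 0 <= 1 - beta by rewrite subr_ge0 ltW.
have hc : clam c lam y a <= clam c mu y a + d.
  rewrite /clam; case: a {ha} => /=.
  - by rewrite !mulr1 -addrA lerD2l -lerBlDl ler_norm.
  - by rewrite !mulr0 !addr0 lerDl normr_ge0.
have := ler_wpM2l hb hc; move: ha; rewrite /Hf; lra.
Qed.

Lemma G_lip c lam mu x : G c lam x <= G c mu x + 3 * `|lam - mu|.
Proof.
rewrite !G_expand.
have h1 : EV true x (Vf c lam) <= EV true x (Vf c mu) + `|lam - mu|.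
  rewrite -(EV_const true x `|lam - mu|) -EV_D; apply: EV_le => y; exact: V_lip.
have h2 : EV false x (Vf c mu) <= EV false x (Vf c lam) + `|lam - mu|.
  rewrite -(EV_const false x `|lam - mu|) -EV_D; apply: EV_le => y.
  by rewrite distrC; exact: V_lip.
apply: (@arith_lip _ _ _ _ _ _ _ _ _ _ _ hb0 hb1 _ h1 h2 (normr_ge0 _)).
exact: ler_norm.
Qed.

Lemma W_zero c (l : 'I_n) : G c (whittle P c beta l) l = 0.
Proof.
set w := whittle P c beta l.
have hw : w = inf (Sx c l) by [].
apply/eqP; rewrite eq_le; apply/andP; split.
- apply/ler_addgt0Pr => e e0; rewrite add0r.
  set lam := w - e / 3.
  have hlam : ~ Sx c l lam.
    move=> hS; have := ge_inf (Sx_lb c l) hS; rewrite -hw /lam.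
    move=> h; have h3 : 0 < e / 3 by rewrite divr_gt0.
    lra.
  have hG : G c lam l <= 0.
    by rewrite leNgt; apply/negP => h; apply: hlam; rewrite /Sx /= Pi_G.
  apply: le_trans (G_lip c w lam l) _.
  have hd : w - lam = e / 3 by rewrite /lam; ring.
  have h3 : 0 <= e / 3 by rewrite divr_ge0 // ltW.
  rewrite hd ger0_norm //.
  have -> : 3 * (e / 3) = e by rewrite mulrC divfK // pnatr_eq0.
  lra.
- apply/ler_addgt0Pr => e e0.
  have e3 : 0 < e / 3 by rewrite divr_gt0.
  have [lam hS hlt] := inf_adherent e3 (conj (Sx_ne c l) (Sx_lb c l)).
  have hge := ge_inf (Sx_lb c l) hS; rewrite -hw in hlt hge.
  have hG : 0 < G c lam l by move: hS; rewrite /Sx /= Pi_G.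
  apply: le_trans (ltW hG) _; apply: le_trans (G_lip c lam w l) _.
  rewrite lerD2l ger0_norm ?subr_ge0 //.
  have h : lam - w <= e / 3 by lra.
  have -> : e = 3 * (e / 3) by rewrite mulrC divfK // pnatr_eq0.
  by apply: ler_wpM2l.
Qed.

Lemma W_opt c (l : 'I_n) : D3 c -> D4 c ->
  optimal P c beta (whittle P c beta l) (thr l) /\
  optimal P c beta (whittle P c beta l) (thr l.+1).
Proof.
move=> hD3 hD4; set w := whittle P c beta l.
have h0 := W_zero c l; rewrite -/w in h0.
have hA := @G_anti c w hD1 hD2 hD3 hD4.
split; apply: optimal_of_thr => y hy.
- by rewrite -h0; apply: hA; apply: ltnW.
- by rewrite -h0; apply: hA.
- by rewrite -h0; apply: hA.
- by rewrite -h0; apply: hA; apply: ltnW.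
Qed.

Lemma W_eq c (l : 'I_n) (x : 'I_n) : D3 c -> D4 c ->
  Dg P c beta (thr l) x + whittle P c beta l * Ng P beta (thr l) x =
  Dg P c beta (thr l.+1) x + whittle P c beta l * Ng P beta (thr l.+1) x.
Proof.
move=> hD3 hD4; have [h1 h2] := W_opt c l hD3 hD4.
by rewrite -!J_lin (@opt_J c _ _ h1) (@opt_J c _ _ h2).
Qed.


Lemma N_diff (l : 'I_n) : exists x, Ng P beta (thr l) x <> Ng P beta (thr l.+1) x.
Proof.
apply: contrapT => hne.
have hall : forall x, Ng P beta (thr l) x = Ng P beta (thr l.+1) x.
  by move=> x; apply: contrapT => h; apply: hne; exists x.
pose c2 := fun (x : 'I_n) (a : bool) => if a then 0 else (((l <= x)%N)%:R : R).
have hD3 : D3 c2.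
  move=> a x y hxy; rewrite /c2; case: a => //.
  case hlx: (l <= x)%N; last by rewrite ler0n.
  by rewrite (leq_trans hlx hxy).
have hD4 : D4 c2.
  move=> x1 x2 a1 a2 h12; rewrite /c2; case: a1; case: a2 => //= _; rewrite ?subrr //.
  rewrite !sub0r lerN2; case hl1: (l <= x1)%N; last by rewrite ler0n.
  by rewrite (leq_trans hl1 h12).
have e := W_eq c2 l l hD3 hD4; rewrite hall in e; move/addIr: e => e.
have hz : polfix (thr l) c2 (fun _ => 0).
  move=> x; rewrite EV_const /c2 /thr; case: (l <= x)%N => /=; rewrite ?mulr0 ?addr0 //.
have h0 := @polfix_uniq (thr l) c2 _ _ (disc_fix (thr l) c2) hz l.
set D := Dg P c2 beta (thr l.+1).
have hnn : forall x, 0 <= D x.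
  apply: (@cmp D (fun _ => 0)) => x; exists (thr l.+1 x).
  rewrite (@EV_ext _ _ _ D); last by move=> y; rewrite subr0.
  have hfx : D x = (1 - beta) * c2 x (thr l.+1 x) + beta * EV (thr l.+1 x) x D.
    exact: (disc_fix (thr l.+1) c2 x).
  rewrite subr0 [leRHS]hfx lerDr.
  apply: mulr_ge0; first by rewrite subr_ge0 ltW.
  by rewrite /c2; case: (thr _ _) => //; apply: ler0n.
have hDl : D l = (1 - beta) + beta * EV false l D.
  have hfx : D l = (1 - beta) * c2 l (thr l.+1 l) + beta * EV (thr l.+1 l) l D.
    exact: (disc_fix (thr l.+1) c2 l).
  by rewrite hfx /thr /c2 ltnn /= leqnn /= mulr1.
have : 0 < D l.
  rewrite hDl; apply: ltr_wpDr; first by apply: mulr_ge0; [apply: ltW|apply: EV_ge].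
  by rewrite subr_gt0.
by rewrite /D -e /Dg h0 ltxx.
Qed.

End Struct.

End Basic.


Theorem lemma5 (R : realType) (n : nat) (P : bool -> 'M[R]_n)
  (c : 'I_n -> bool -> R) (beta : R) :
  0 < beta < 1 -> stochastic P ->
  D1 P -> D2 P -> D3 c -> D4 c ->
  (* 1. an optimal threshold policy exists for every lambda *)
  (forall lam : R, exists l : nat, (l <= n)%N /\ optimal P c beta lam (thr l)) /\
  (* 2. *)
  ((forall (x : 'I_n) (l1 l2 : nat), (l1 <= l2 <= n)%N ->
       Ng P beta (thr l2) x <= Ng P beta (thr l1) x) ->
   (forall lam1 lam2 : R, lam1 <= lam2 -> (ell P c beta lam1 <= ell P c beta lam2)%N) /\
   indexable P c beta /\
   (forall x y : 'I_n, (x <= y)%N -> whittle P c beta x <= whittle P c beta y) /\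
   (forall l : 'I_n,
      (exists x : 'I_n, Ng P beta (thr l) x <> Ng P beta (thr l.+1) x) /\
      (forall x : 'I_n, Ng P beta (thr l) x <> Ng P beta (thr l.+1) x ->
         whittle P c beta l =
           (Dg P c beta (thr l.+1) x - Dg P c beta (thr l) x) /
           (Ng P beta (thr l) x - Ng P beta (thr l.+1) x)))).
Proof.
move=> /andP[hb0 hb1] [HP0 HP1] hD1 hD2 hD3 hD4.
split.
  by move=> lam; apply: (@exists_thr _ _ _ _ hb0 hb1 HP0 HP1 hD1 hD2 c lam hD3 hD4).
move=> HN; split.
  by move=> l1 l2 hl; apply: (@ell_mono _ _ _ _ hb0 hb1 HP0 HP1 hD1 hD2 HN c l1 l2 hD3 hD4 hl).
split; first exact: (@indexable_thm _ _ _ _ hb0 hb1 HP0 HP1 hD1 hD2 HN c hD3 hD4).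
split.
  by move=> x y hxy; apply: (@whittle_mono _ _ _ _ hb0 hb1 HP0 HP1 hD1 hD2 c x y hD3 hD4 hxy).
move=> l; split; first exact: (@N_diff _ _ _ _ hb0 hb1 HP0 HP1 hD1 hD2 l).
move=> x hx.
have e := @W_eq _ _ _ _ hb0 hb1 HP0 HP1 hD1 hD2 c l x hD3 hD4.
move: e hx.
set w := whittle P c beta l.
set N0 := Ng P beta (thr l) x; set N1 := Ng P beta (thr l.+1) x.
set D0 := Dg P c beta (thr l) x; set D1' := Dg P c beta (thr l.+1) x.
move=> e hx.
have hne : N0 - N1 != 0 by rewrite subr_eq0; apply/eqP.
have -> : D1' - D0 = w * (N0 - N1) by rewrite mulrBr; lra.
by rewrite mulfK.
Qed.
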